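(* Let $k,d\ge1$, let $x_1,\dots,x_d\in\mathbb T^k$ be free, let $M\ge1$ be an integer, let $A,B\subseteq\mathbb T^k$ be Baire measurable and let $\mathcal G=(A,B,E)$ with $E:=\{(a,b)\in A\times B: b-a\in V_M\}$, where $V_M:=\{\sum_{j=1}^dn_jx_j:n\in\mathbb Z^d,\|n\|_\infty\le M\}$. Let $i\ge1$, $r_i\in\mathbb N$, and let $A_i\subseteq A$, $B_i\subseteq B$ be Baire measurable sets such that at least one of $A_i,B_i$ is empty and $A_i\cup B_i$ is $(r_i+4M)$-sparse. Then for every Baire measurable $\mathcal G$-extendable matching $\mathcal M_{i-1}$ there is a Baire measurable matching $\mathcal M_i\supseteq\mathcal M_{i-1}$ in $\mathcal G$ such that: $\mathcal M_i^{-1}(B)\supseteq A_i$ and $\mathcal M_i(A)\supseteq B_i$; for every $u\in\mathbb T^k$, any two distinct pairs $(a,b),(x,y)\in(\mathcal M_i\setminus\mathcal M_{i-1})_u$ satisfy $\operatorname{dist}(\{a,b\},\{x,y\})>r_i+2M$; and for every $(a,b)\in\mathcal M_i\setminus\mathcal M_{i-1}$, the set $\mathcal M_{i-1}\cup\{(a,b)\}$ is a $\mathcal G$-extendable matching.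
   Context: $\mathbb T^k=\mathbb R^k/\mathbb Z^k\cong[0,1)^k$; vectors are free if no non-trivial integer combination is $0$ in $\mathbb T^k$. For $X\subseteq\mathbb T^k$, $X_u:=\{n\in\mathbb Z^d:u+\sum n_jx_j\in X\}$; $X$ is $r$-sparse if for each $u$ distinct elements of $X_u$ are at $L^\infty$-distance $>r$. A matching in $\mathcal G$ is a set of edges forming a partial injection $A\to B$; it is perfect if it is a bijection $A\to B$; a matching is $\mathcal G$-extendable if it is contained in some (not necessarily measurable) perfect matching of $\mathcal G$. A matching $\mathcal M$ is Baire measurable if for each $v\in V_M$ the set $\{a\in A:\mathcal M(a)-a=v\}$ is Baire measurable. For a set $\mathcal N$ of edges and $u\in\mathbb T^k$, $\mathcal N_u:=\{(n,m)\in\mathbb Z^d\times\mathbb Z^d:(u+\sum n_jx_j,\,u+\sum m_jx_j)\in\mathcal N\}$. Distance between finite sets $X,Y\subseteq\mathbb Z^d$ is $\min\{\|x-y\|_\infty:x\in X,y\in Y\}$. *)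

(* Defs.v *)
From Stdlib Require Import Reals Lra Lia ZArith.
Open Scope R_scope.

(** * The torus T^k = R^k / Z^k, with canonical representatives in [0,1)^k.
    A point is a function nat -> R whose coordinates i < k lie in [0,1)
    and whose coordinates i >= k are 0 (so equality of points is
    equality in the torus). *)

Definition torus_pred (k : nat) (x : nat -> R) : Prop :=
  (forall i, (i < k)%nat -> 0 <= x i < 1) /\ (forall i, (k <= i)%nat -> x i = 0).

Definition torus (k : nat) : Type := { x : nat -> R | torus_pred k x }.

Definition tcoord {k : nat} (x : torus k) (i : nat) : R := proj1_sig x i.

Definition frac (r : R) : R := r - IZR (up r) + 1.

Lemma frac_range (r : R) : 0 <= frac r < 1.
Proof. unfold frac. destruct (archimed r) as [H1 H2]. lra. Qed.

Lemma tproj_ok (k : nat) (y : nat -> R) :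
  torus_pred k (fun i => if Nat.ltb i k then frac (y i) else 0).
Proof.
  split; intros i Hi.
  - rewrite (proj2 (Nat.ltb_lt i k) Hi). apply frac_range.
  - destruct (Nat.ltb_spec i k); [lia | reflexivity].
Qed.

Definition tproj (k : nat) (y : nat -> R) : torus k :=
  exist _ (fun i => if Nat.ltb i k then frac (y i) else 0) (tproj_ok k y).

Definition tzero (k : nat) : torus k := tproj k (fun _ => 0).

Definition tadd {k : nat} (a b : torus k) : torus k :=
  tproj k (fun i => tcoord a i + tcoord b i).

Fixpoint rsum (n : nat) (f : nat -> R) : R :=
  match n with
  | O => 0
  | S n => rsum n f + f n
  end.

(** u + sum_{j<d} n_j x_j,  for n in Z^d (only coordinates j < d of n matter) *)
Definition tpt {k : nat} (d : nat) (x : nat -> torus k) (u : torus k) (n : nat -> Z)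
  : torus k :=
  tproj k (fun i => tcoord u i + rsum d (fun j => IZR (n j) * tcoord (x j) i)).

Definition free {k : nat} (d : nat) (x : nat -> torus k) : Prop :=
  forall n : nat -> Z, tpt d x (tzero k) n = tzero k -> forall j, (j < d)%nat -> n j = 0%Z.

Definition zeq_d (d : nat) (n m : nat -> Z) : Prop := forall j, (j < d)%nat -> n j = m j.

Definition zfar (d : nat) (r : Z) (n m : nat -> Z) : Prop :=
  exists j, (j < d)%nat /\ (Z.abs (n j - m j) > r)%Z.

Definition sparse {k : nat} (d : nat) (x : nat -> torus k) (r : Z)
  (X : torus k -> Prop) : Prop :=
  forall (u : torus k) (n m : nat -> Z),
    X (tpt d x u n) -> X (tpt d x u m) -> ~ zeq_d d n m -> zfar d r n m.

Definition cdist (a b : R) : R := Rmin (Rabs (a - b)) (1 - Rabs (a - b)).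

(** the torus metric: max_{i<k} of coordinatewise circle distance, expressed
    as "ball of radius eps" *)
Definition tball {k : nat} (x : torus k) (eps : R) (y : torus k) : Prop :=
  forall i, (i < k)%nat -> cdist (tcoord x i) (tcoord y i) < eps.

Definition topen {k : nat} (U : torus k -> Prop) : Prop :=
  forall x, U x -> exists eps, 0 < eps /\ forall y, tball x eps y -> U y.

Definition tclosure {k : nat} (S : torus k -> Prop) (x : torus k) : Prop :=
  forall eps, 0 < eps -> exists y, S y /\ tball x eps y.

Definition nowhere_dense {k : nat} (S : torus k -> Prop) : Prop :=
  forall U : torus k -> Prop, topen U -> (forall x, U x -> tclosure S x) ->
    forall x, ~ U x.

Definition meager {k : nat} (S : torus k -> Prop) : Prop :=
  exists Ns : nat -> torus k -> Prop,
    (forall n, nowhere_dense (Ns n)) /\ (forall x, S x -> exists n, Ns n x).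

Definition baire_meas {k : nat} (S : torus k -> Prop) : Prop :=
  exists U : torus k -> Prop, topen U /\
    meager (fun x => (S x /\ ~ U x) \/ (U x /\ ~ S x)).

Definition inVM {k : nat} (d : nat) (x : nat -> torus k) (M : nat) (v : torus k) : Prop :=
  exists n : nat -> Z,
    (forall j, (j < d)%nat -> (Z.abs (n j) <= Z.of_nat M)%Z) /\ v = tpt d x (tzero k) n.

Definition gedge {k : nat} (d : nat) (x : nat -> torus k) (M : nat)
  (A B : torus k -> Prop) (a b : torus k) : Prop :=
  A a /\ B b /\ exists v, inVM d x M v /\ b = tadd a v.

Definition edgeset (k : nat) : Type := torus k -> torus k -> Prop.

Definition matching {k : nat} (d : nat) (x : nat -> torus k) (M : nat)
  (A B : torus k -> Prop) (N : edgeset k) : Prop :=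
  (forall a b, N a b -> gedge d x M A B a b) /\
  (forall a b b', N a b -> N a b' -> b = b') /\
  (forall a a' b, N a b -> N a' b -> a = a').

Definition perfect_matching {k : nat} (d : nat) (x : nat -> torus k) (M : nat)
  (A B : torus k -> Prop) (N : edgeset k) : Prop :=
  matching d x M A B N /\
  (forall a, A a -> exists b, N a b) /\ (forall b, B b -> exists a, N a b).

Definition extendable {k : nat} (d : nat) (x : nat -> torus k) (M : nat)
  (A B : torus k -> Prop) (N : edgeset k) : Prop :=
  matching d x M A B N /\
  exists P : edgeset k, perfect_matching d x M A B P /\ (forall a b, N a b -> P a b).

Definition baire_matching {k : nat} (d : nat) (x : nat -> torus k) (M : nat)
  (A : torus k -> Prop) (N : edgeset k) : Prop :=
  forall v, inVM d x M v -> baire_meas (fun a => A a /\ N a (tadd a v)).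

(* Main.v *)
Require Import Defs.
From Stdlib Require Import Reals ZArith.
From Stdlib Require Import Lra Lia List Cantor Arith Classical IndefiniteDescription FunctionalExtensionality ProofIrrelevance.
Open Scope R_scope.


Definition isint (r : R) : Prop := exists z : Z, r = IZR z.

Lemma isint_0 : isint 0. Proof. exists 0%Z. reflexivity. Qed.
Lemma isint_IZR z : isint (IZR z). Proof. exists z. reflexivity. Qed.
Lemma isint_add a b : isint a -> isint b -> isint (a + b).
Proof. intros [z1 ->] [z2 ->]. exists (z1 + z2)%Z. rewrite plus_IZR. reflexivity. Qed.
Lemma isint_opp a : isint a -> isint (- a).
Proof. intros [z1 ->]. exists (- z1)%Z. rewrite opp_IZR. reflexivity. Qed.
Lemma isint_eq a b : a = b -> isint a -> isint b.
Proof. intros ->; auto. Qed.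

Lemma frac_int r : isint (r - frac r).
Proof. unfold frac. exists (up r - 1)%Z. rewrite minus_IZR. simpl. lra. Qed.

Lemma frac_eq r s : isint (r - s) -> frac r = frac s.
Proof.
  intros [z Hz]. unfold frac.
  assert (up r = (up s + z)%Z).
  { symmetry. apply tech_up; rewrite plus_IZR; destruct (archimed s); lra. }
  rewrite H, plus_IZR. lra.
Qed.

Lemma frac_eq_inv r s : frac r = frac s -> isint (r - s).
Proof. unfold frac. intros H. exists (up r - up s)%Z. rewrite minus_IZR. lra. Qed.

Lemma frac_id r : 0 <= r < 1 -> frac r = r.
Proof.
  intros H. unfold frac. assert (up r = 1%Z).
  { symmetry. apply tech_up; simpl; lra. }
  rewrite H0. simpl. lra.
Qed.

Lemma sig_eq_ext {A : Type} (P : A -> Prop) (a b : {x | P x}) :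
  proj1_sig a = proj1_sig b -> a = b.
Proof. destruct a, b; simpl. intros ->. f_equal. apply proof_irrelevance. Qed.

Lemma tcoord_tproj k y i : (i < k)%nat -> tcoord (tproj k y) i = frac (y i).
Proof. intros H. unfold tcoord, tproj; simpl. rewrite (proj2 (Nat.ltb_lt i k) H). reflexivity. Qed.

Lemma tcoord_tproj_int k y i : (i < k)%nat -> isint (tcoord (tproj k y) i - y i).
Proof.
  intros H. rewrite tcoord_tproj by auto.
  apply isint_eq with (- (y i - frac (y i))). ring. apply isint_opp, frac_int.
Qed.

Lemma tproj_eq k y y' : (forall i, (i < k)%nat -> isint (y i - y' i)) -> tproj k y = tproj k y'.
Proof.
  intros H. apply sig_eq_ext. simpl. apply functional_extensionality. intros i.
  destruct (Nat.ltb_spec i k); auto. apply frac_eq; auto.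
Qed.

Lemma tproj_eq_inv k y y' : tproj k y = tproj k y' -> forall i, (i < k)%nat -> isint (y i - y' i).
Proof.
  intros H i Hi. apply frac_eq_inv.
  rewrite <- (tcoord_tproj k y i Hi), <- (tcoord_tproj k y' i Hi). rewrite H. reflexivity.
Qed.

Lemma tcoord_range {k} (u : torus k) i : (i < k)%nat -> 0 <= tcoord u i < 1.
Proof. intros H. destruct u as [f [H1 H2]]. unfold tcoord; simpl. auto. Qed.

Lemma torus_eta {k} (u : torus k) : tproj k (tcoord u) = u.
Proof.
  apply sig_eq_ext. simpl. apply functional_extensionality. intros i.
  destruct u as [f [H1 H2]]. unfold tcoord; simpl.
  destruct (Nat.ltb_spec i k).
  - apply frac_id; auto.
  - symmetry; auto.
Qed.

Lemma torus_eq_int {k} (u v : torus k) :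
  (forall i, (i < k)%nat -> isint (tcoord u i - tcoord v i)) -> u = v.
Proof. intros H. rewrite <- (torus_eta u), <- (torus_eta v). apply tproj_eq; auto. Qed.

Lemma torus_eq_int_inv {k} (u v : torus k) :
  u = v -> forall i, (i < k)%nat -> isint (tcoord u i - tcoord v i).
Proof. intros -> i _. apply isint_eq with 0. ring. apply isint_0. Qed.

Lemma rsum_ext n f g : (forall j, (j < n)%nat -> f j = g j) -> rsum n f = rsum n g.
Proof. induction n; simpl; intros H; auto. rewrite IHn by auto. rewrite H by auto. reflexivity. Qed.
Lemma rsum_add n f g : rsum n (fun j => f j + g j) = rsum n f + rsum n g.
Proof. induction n; simpl; [ring|]. rewrite IHn. ring. Qed.
Lemma rsum_0 n : rsum n (fun _ => 0) = 0.
Proof. induction n; simpl; auto. rewrite IHn; ring. Qed.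

Definition zadd (n m : nat -> Z) : nat -> Z := fun j => (n j + m j)%Z.
Definition zsub (n m : nat -> Z) : nat -> Z := fun j => (n j - m j)%Z.
Definition zopp (n : nat -> Z) : nat -> Z := fun j => (- n j)%Z.
Definition zzero : nat -> Z := fun _ => 0%Z.

Definition Ssum {k} d (x : nat -> torus k) (n : nat -> Z) (i : nat) : R :=
  rsum d (fun j => IZR (n j) * tcoord (x j) i).

Lemma Ssum_add {k} d (x : nat -> torus k) n m i : Ssum d x (zadd n m) i = Ssum d x n i + Ssum d x m i.
Proof. unfold Ssum, zadd. rewrite <- rsum_add. apply rsum_ext. intros. rewrite plus_IZR. ring. Qed.
Lemma rsum_sub n f g : rsum n (fun j => f j - g j) = rsum n f - rsum n g.
Proof. induction n; simpl; [ring|]. rewrite IHn. ring. Qed.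
Lemma Ssum_sub {k} d (x : nat -> torus k) n m i : Ssum d x (zsub n m) i = Ssum d x n i - Ssum d x m i.
Proof. unfold Ssum, zsub. rewrite <- rsum_sub. apply rsum_ext. intros. rewrite minus_IZR. ring. Qed.
Lemma Ssum_zero {k} d (x : nat -> torus k) i : Ssum d x zzero i = 0.
Proof. unfold Ssum, zzero. induction d; simpl; auto. rewrite IHd. ring. Qed.

Lemma tcoord_tpt_int {k} d x (u : torus k) n i : (i < k)%nat ->
  isint (tcoord (tpt d x u n) i - (tcoord u i + Ssum d x n i)).
Proof. intros H. unfold tpt. apply tcoord_tproj_int; auto. Qed.

Lemma tcoord_tadd_int {k} (u v : torus k) i : (i < k)%nat ->
  isint (tcoord (tadd u v) i - (tcoord u i + tcoord v i)).
Proof. intros H. unfold tadd. apply tcoord_tproj_int; auto. Qed.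

Lemma tcoord_tzero k i : tcoord (tzero k) i = 0.
Proof. unfold tzero, tcoord, tproj; simpl. destruct (i <? k)%nat; auto. unfold frac.
  replace (up 0) with 1%Z. simpl; ring. apply tech_up; simpl; lra. Qed.
Lemma isint_sub a b : isint a -> isint b -> isint (a - b).
Proof. intros [z1 ->] [z2 ->]. exists (z1 - z2)%Z. rewrite minus_IZR. reflexivity. Qed.


Ltac icomb e := apply isint_eq with e; [ring | repeat (assumption || apply isint_add || apply isint_sub || apply isint_opp)].

Lemma tpt_zero {k} d x (u : torus k) : tpt d x u zzero = u.
Proof.
  apply torus_eq_int. intros i Hi.
  pose proof (tcoord_tpt_int d x u zzero i Hi). rewrite Ssum_zero in H.
  icomb (tcoord (tpt d x u zzero) i - (tcoord u i + 0)).
Qed.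

Lemma tpt_add {k} d x (u : torus k) n w :
  tadd (tpt d x u n) (tpt d x (tzero k) w) = tpt d x u (zadd n w).
Proof.
  apply torus_eq_int. intros i Hi.
  pose proof (tcoord_tpt_int d x u n i Hi).
  pose proof (tcoord_tpt_int d x (tzero k) w i Hi).
  pose proof (tcoord_tpt_int d x u (zadd n w) i Hi).
  pose proof (tcoord_tadd_int (tpt d x u n) (tpt d x (tzero k) w) i Hi).
  rewrite Ssum_add in H1. rewrite tcoord_tzero in H0.
  icomb ((tcoord (tadd (tpt d x u n) (tpt d x (tzero k) w)) i -
     (tcoord (tpt d x u n) i + tcoord (tpt d x (tzero k) w) i))
    + (tcoord (tpt d x u n) i - (tcoord u i + Ssum d x n i))
    + (tcoord (tpt d x (tzero k) w) i - (0 + Ssum d x w i))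
    - (tcoord (tpt d x u (zadd n w)) i - (tcoord u i + (Ssum d x n i + Ssum d x w i)))).
Qed.

Lemma tpt_tpt {k} d x (u : torus k) n m :
  tpt d x (tpt d x u n) m = tpt d x u (zadd n m).
Proof.
  apply torus_eq_int. intros i Hi.
  pose proof (tcoord_tpt_int d x u n i Hi).
  pose proof (tcoord_tpt_int d x (tpt d x u n) m i Hi).
  pose proof (tcoord_tpt_int d x u (zadd n m) i Hi).
  rewrite Ssum_add in H1.
  icomb ((tcoord (tpt d x (tpt d x u n) m) i - (tcoord (tpt d x u n) i + Ssum d x m i))
    + (tcoord (tpt d x u n) i - (tcoord u i + Ssum d x n i))
    - (tcoord (tpt d x u (zadd n m)) i - (tcoord u i + (Ssum d x n i + Ssum d x m i)))).
Qed.

Lemma tpt_as_tadd {k} d x (u : torus k) n : tpt d x u n = tadd u (tpt d x (tzero k) n).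
Proof.
  apply torus_eq_int. intros i Hi.
  pose proof (tcoord_tpt_int d x u n i Hi).
  pose proof (tcoord_tpt_int d x (tzero k) n i Hi).
  pose proof (tcoord_tadd_int u (tpt d x (tzero k) n) i Hi).
  rewrite tcoord_tzero in H0.
  icomb ((tcoord (tpt d x u n) i - (tcoord u i + Ssum d x n i))
    - (tcoord (tpt d x (tzero k) n) i - (0 + Ssum d x n i))
    - (tcoord (tadd u (tpt d x (tzero k) n)) i - (tcoord u i + tcoord (tpt d x (tzero k) n) i))).
Qed.

Lemma tpt_zeq {k} d x (u : torus k) n m : zeq_d d n m -> tpt d x u n = tpt d x u m.
Proof.
  intros H. unfold tpt. f_equal. apply FunctionalExtensionality.functional_extensionality.
  intros i. f_equal. apply rsum_ext. intros j Hj. rewrite H; auto.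
Qed.

Lemma tpt_inj {k} d x (u : torus k) n m : free d x -> tpt d x u n = tpt d x u m -> zeq_d d n m.
Proof.
  intros Hf He.
  assert (tpt d x (tzero k) (zsub n m) = tzero k).
  { apply torus_eq_int. intros i Hi.
    pose proof (torus_eq_int_inv _ _ He i Hi).
    pose proof (tcoord_tpt_int d x u n i Hi).
    pose proof (tcoord_tpt_int d x u m i Hi).
    pose proof (tcoord_tpt_int d x (tzero k) (zsub n m) i Hi).
    rewrite Ssum_sub in H2. rewrite !tcoord_tzero in *.
    icomb ((tcoord (tpt d x (tzero k) (zsub n m)) i - (0 + (Ssum d x n i - Ssum d x m i)))
      + (tcoord (tpt d x u n) i - tcoord (tpt d x u m) i)
      - (tcoord (tpt d x u n) i - (tcoord u i + Ssum d x n i))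
      + (tcoord (tpt d x u m) i - (tcoord u i + Ssum d x m i))). }
  intros j Hj. pose proof (Hf _ H j Hj). unfold zsub in H0. lia.
Qed.

Lemma int_small (z : Z) : -2 < IZR z < 2 -> (z = -1 \/ z = 0 \/ z = 1)%Z.
Proof. intros [H1 H2]. apply lt_IZR in H1. apply lt_IZR in H2. lia. Qed.

Lemma cdist_inv a b a' b' : 0 <= a < 1 -> 0 <= b < 1 -> 0 <= a' < 1 -> 0 <= b' < 1 ->
  isint ((a - b) - (a' - b')) -> cdist a b = cdist a' b'.
Proof.
  intros Ha Hb Ha' Hb' [z Hz].
  assert (-2 < IZR z < 2) by lra.
  unfold cdist.
  destruct (int_small z H) as [-> | [-> | ->]]; simpl in Hz;
  unfold Rmin, Rabs; repeat destruct Rcase_abs; repeat destruct Rle_dec; lra.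
Qed.

Lemma tball_tadd {k} (y z t : torus k) eps :
  tball (tadd y t) eps (tadd z t) <-> tball y eps z.
Proof.
  assert (forall i, (i < k)%nat -> cdist (tcoord (tadd y t) i) (tcoord (tadd z t) i) = cdist (tcoord y i) (tcoord z i)).
  { intros i Hi. apply cdist_inv; try apply tcoord_range; auto.
    pose proof (tcoord_tadd_int y t i Hi). pose proof (tcoord_tadd_int z t i Hi).
    icomb ((tcoord (tadd y t) i - (tcoord y i + tcoord t i)) - (tcoord (tadd z t) i - (tcoord z i + tcoord t i))). }
  unfold tball; split; intros H1 i Hi; specialize (H1 i Hi); rewrite ?H in *; auto.
Qed.

Definition tneg {k} (t : torus k) : torus k := tproj k (fun i => - tcoord t i).

Lemma tadd_tneg {k} (y t : torus k) : tadd (tadd y t) (tneg t) = y.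
Proof.
  apply torus_eq_int. intros i Hi.
  pose proof (tcoord_tadd_int y t i Hi).
  pose proof (tcoord_tadd_int (tadd y t) (tneg t) i Hi).
  pose proof (tcoord_tproj_int k (fun i => - tcoord t i) i Hi). fold (tneg t) in H1.
  icomb ((tcoord (tadd (tadd y t) (tneg t)) i - (tcoord (tadd y t) i + tcoord (tneg t) i))
    + (tcoord (tadd y t) i - (tcoord y i + tcoord t i)) + (tcoord (tneg t) i - - tcoord t i)).
Qed.

Lemma tneg_tadd {k} (y t : torus k) : tadd (tadd y (tneg t)) t = y.
Proof.
  apply torus_eq_int. intros i Hi.
  pose proof (tcoord_tadd_int y (tneg t) i Hi).
  pose proof (tcoord_tadd_int (tadd y (tneg t)) t i Hi).
  pose proof (tcoord_tproj_int k (fun i => - tcoord t i) i Hi). fold (tneg t) in H1.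
  icomb ((tcoord (tadd (tadd y (tneg t)) t) i - (tcoord (tadd y (tneg t)) i + tcoord t i))
    + (tcoord (tadd y (tneg t)) i - (tcoord y i + tcoord (tneg t) i)) + (tcoord (tneg t) i - - tcoord t i)).
Qed.


Lemma meager_sub {k} (S T : torus k -> Prop) : meager S -> (forall y, T y -> S y) -> meager T.
Proof. intros [Ns [H1 H2]] H. exists Ns. split; auto. Qed.

Lemma nd_empty {k} : nowhere_dense (fun _ : torus k => False).
Proof.
  intros U HU Hc y Uy. destruct (HU y Uy) as [eps [He _]].
  destruct (Hc y Uy eps He) as [z [[] _]].
Qed.

Lemma meager_empty {k} : meager (fun _ : torus k => False).
Proof. exists (fun _ _ => False). split. intros; apply nd_empty. intros y []. Qed.

Lemma meager_countable {k} (S : nat -> torus k -> Prop) :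
  (forall n, meager (S n)) -> meager (fun y => exists n, S n y).
Proof.
  intros H. apply functional_choice in H. destruct H as [F HF].
  exists (fun p y => F (fst (Cantor.of_nat p)) (snd (Cantor.of_nat p)) y). split.
  - intros p. apply HF.
  - intros y [n Hn]. destruct (proj2 (HF n) y Hn) as [m Hm].
    exists (Cantor.to_nat (n, m)). rewrite Cantor.cancel_of_to. simpl. auto.
Qed.

Lemma meager_union2 {k} (S T : torus k -> Prop) : meager S -> meager T -> meager (fun y => S y \/ T y).
Proof.
  intros HS HT.
  apply meager_sub with (fun y => exists n, (fun n => match n with O => S | _ => T end) n y).
  - apply meager_countable. intros [|n]; auto.
  - intros y [Hy|Hy]; [exists O | exists 1%nat]; auto.
Qed.

Lemma baire_ext {k} (S T : torus k -> Prop) : (forall y, S y <-> T y) -> baire_meas S -> baire_meas T.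
Proof.
  intros H [U [HU HM]]. exists U. split; auto. eapply meager_sub; eauto.
  intros y. rewrite <- !H. auto.
Qed.

Lemma baire_meager {k} (S : torus k -> Prop) : meager S -> baire_meas S.
Proof.
  intros H. exists (fun _ => False). split.
  - intros y [].
  - eapply meager_sub; eauto. intros y [[]|[[] _]]; auto.
Qed.

Lemma baire_compl {k} (S : torus k -> Prop) : baire_meas S -> baire_meas (fun y => ~ S y).
Proof.
  intros [U [HU HM]].
  set (W := fun y => exists O : torus k -> Prop, topen O /\ O y /\ forall z, O z -> ~ U z).
  exists W. split.
  - intros y [O [HO [Oy HOU]]]. destruct (HO y Oy) as [eps [He Hb]].
    exists eps. split; auto. intros z Hz. exists O. auto.
  - set (D := fun y => ~ U y /\ ~ W y).
    assert (HD : nowhere_dense D).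
    { intros O HO Hc y Oy.
      assert (HOU : forall w, O w -> ~ U w).
      { intros w Ow Uw. destruct (HU w Uw) as [e2 [He2 Hb2]].
        destruct (Hc w Ow e2 He2) as [z [[Dz1 Dz2] Hz]]. apply Dz1. auto. }
      destruct (HO y Oy) as [eps [He Hb]].
      destruct (Hc y Oy eps He) as [z [[Dz1 Dz2] Hz]].
      apply Dz2. exists O. split; auto. }
    apply meager_sub with (fun y => ((S y /\ ~ U y) \/ (U y /\ ~ S y)) \/ D y).
    + apply meager_union2; auto. exists (fun _ => D). split; auto. intros y Hy; exists O; auto.
    + intros y [[H1 H2]|[H1 H2]].
      * destruct (classic (U y)). left; right; split; auto. destruct (classic (S y)); auto.
        right. split; auto.
      * destruct H1 as [O [HO [Oy HOU]]]. left; left. split; auto. apply NNPP; auto.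
Qed.

Lemma baire_countable_union {k} (S : nat -> torus k -> Prop) :
  (forall n, baire_meas (S n)) -> baire_meas (fun y => exists n, S n y).
Proof.
  intros H. apply functional_choice in H. destruct H as [F HF].
  exists (fun y => exists n, F n y). split.
  - intros y [n Hn]. destruct (proj1 (HF n) y Hn) as [eps [He Hb]].
    exists eps. split; auto. intros z Hz. exists n; auto.
  - apply meager_sub with (fun y => exists n, (S n y /\ ~ F n y) \/ (F n y /\ ~ S n y)).
    + apply meager_countable. intros n. apply HF.
    + intros y [[[n Hn] H2]|[[n Hn] H2]]; exists n.
      * left. split; auto. intros Hf; apply H2; exists n; auto.
      * right. split; auto. intros Hf; apply H2; exists n; auto.
Qed.

Lemma baire_countable_inter {k} (S : nat -> torus k -> Prop) :
  (forall n, baire_meas (S n)) -> baire_meas (fun y => forall n, S n y).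
Proof.
  intros H. apply baire_ext with (fun y => ~ ~ forall n, S n y).
  { intros y; split; [intros Hy; apply NNPP; auto | auto]. }
  apply baire_compl. apply baire_ext with (fun y => exists n, ~ S n y).
  { intros y; split. intros [n Hn] Ha; auto. intros Hn. apply not_all_ex_not; auto. }
  apply baire_countable_union. intros n. apply baire_compl; auto.
Qed.

Lemma baire_union2 {k} (S T : torus k -> Prop) : baire_meas S -> baire_meas T -> baire_meas (fun y => S y \/ T y).
Proof.
  intros HS HT. apply baire_ext with (fun y => exists n, (fun n => match n with O => S | _ => T end) n y).
  - intros y; split. intros [[|n] Hn]; auto. intros [Hy|Hy]; [exists O | exists 1%nat]; auto.
  - apply baire_countable_union. intros [|n]; auto.
Qed.

Lemma baire_inter2 {k} (S T : torus k -> Prop) : baire_meas S -> baire_meas T -> baire_meas (fun y => S y /\ T y).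
Proof.
  intros HS HT. apply baire_ext with (fun y => ~ (~ S y \/ ~ T y)).
  - intros y; split. intros H; split; apply NNPP; tauto. tauto.
  - apply baire_compl, baire_union2; apply baire_compl; auto.
Qed.

Lemma baire_false {k} : baire_meas (fun _ : torus k => False).
Proof. apply baire_meager, meager_empty. Qed.

Lemma baire_true {k} : baire_meas (fun _ : torus k => True).
Proof. apply baire_ext with (fun y => ~ False). tauto. apply baire_compl, baire_false. Qed.

Lemma baire_translate {k} (S : torus k -> Prop) (t : torus k) :
  baire_meas S -> baire_meas (fun y => S (tadd y t)).
Proof.
  set (h := fun y : torus k => tadd y t). set (g := fun y : torus k => tadd y (tneg t)).
  assert (hg : forall y, h (g y) = y) by (intros; apply tneg_tadd).
  assert (gh : forall y, g (h y) = y) by (intros; apply tadd_tneg).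
  assert (hb : forall y z eps, tball (h y) eps (h z) <-> tball y eps z) by (intros; apply tball_tadd).
  assert (gb : forall y z eps, tball (g y) eps (g z) <-> tball y eps z) by (intros; apply tball_tadd).
  assert (Hopen : forall (f : torus k -> torus k) U, (forall y z eps, tball (f y) eps (f z) <-> tball y eps z) ->
     topen U -> topen (fun y => U (f y))).
  { intros f U Hf HU y Uy. destruct (HU _ Uy) as [eps [He Hb]]. exists eps. split; auto.
    intros z Hz. apply Hb. apply Hf; auto. }
  assert (Hcl : forall T y, tclosure (fun y => T (h y)) y -> tclosure T (h y)).
  { intros T y Hc eps He. destruct (Hc eps He) as [z [Tz Hz]]. exists (h z). split; auto. apply hb; auto. }
  assert (Hnd : forall T, nowhere_dense T -> nowhere_dense (fun y => T (h y))).
  { intros T HT U HU Hc y Uy.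
    apply (HT (fun z => U (g z)) (Hopen g U gb HU)) with (h y).
    - intros z Uz. rewrite <- (hg z). apply Hcl. apply Hc; auto.
    - rewrite gh; auto. }
  assert (Hm : forall T, meager T -> meager (fun y => T (h y))).
  { intros T [Ns [H1 H2]]. exists (fun n y => Ns n (h y)). split; auto. }
  intros [U [HU HM]]. exists (fun y => U (h y)). split.
  - apply Hopen; auto.
  - apply (Hm _ HM).
Qed.


Lemma baire_dep {k} (Ss : list (torus k -> Prop)) : forall (Q : torus k -> Prop),
  (forall S, In S Ss -> baire_meas S) ->
  (forall a a', (forall S, In S Ss -> (S a <-> S a')) -> Q a -> Q a') -> baire_meas Q.
Proof.
  induction Ss as [|S Ss IH]; intros Q HB HQ.
  - destruct (classic (exists a, Q a)) as [[a Ha]|Hn].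
    + apply baire_ext with (fun _ => True). intros y; split; auto. intros _.
      apply (HQ a); auto. intros S [].
      apply baire_true.
    + apply baire_ext with (fun _ => False). intros y; split; [intros []|]. intros Hy; apply Hn; eauto.
      apply baire_false.
  - set (Q1 := fun a => exists a', S a' /\ (forall T, In T Ss -> (T a' <-> T a)) /\ Q a').
    set (Q0 := fun a => exists a', ~ S a' /\ (forall T, In T Ss -> (T a' <-> T a)) /\ Q a').
    assert (B1 : baire_meas Q1).
    { apply IH. intros; apply HB; simpl; auto.
      intros a a' Ha [a0 [H1 [H2 H3]]]. exists a0. split; auto. split; auto.
      intros T HT. rewrite H2 by auto. auto. }
    assert (B0 : baire_meas Q0).
    { apply IH. intros; apply HB; simpl; auto.
      intros a a' Ha [a0 [H1 [H2 H3]]]. exists a0. split; auto. split; auto.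
      intros T HT. rewrite H2 by auto. auto. }
    apply baire_ext with (fun a => (S a /\ Q1 a) \/ (~ S a /\ Q0 a)).
    + intros a. split.
      * intros [[Sa [a0 [H1 [H2 H3]]]] | [Sa [a0 [H1 [H2 H3]]]]]; apply (HQ a0); auto;
        intros T [<-|HT]; [tauto|auto|tauto|auto].
      * intros Qa. destruct (classic (S a)); [left|right]; split; auto; exists a; repeat split; auto.
    + apply baire_union2; apply baire_inter2; auto.
      apply HB; simpl; auto. apply baire_compl, HB; simpl; auto.
Qed.


Definition bnd (d : nat) (N : nat) (n : nat -> Z) : Prop :=
  forall j, (j < d)%nat -> (Z.abs (n j) <= Z.of_nat N)%Z.

Definition upd (n : nat -> Z) (d : nat) (z : Z) : nat -> Z :=
  fun j => if Nat.eqb j d then z else n j.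

Definition zrange (N : nat) : list Z := map (fun i => (Z.of_nat i - Z.of_nat N)%Z) (seq 0 (2 * N + 1)).

Lemma zrange_spec N z : (Z.abs z <= Z.of_nat N)%Z -> In z (zrange N).
Proof.
  intros H. unfold zrange. apply in_map_iff. exists (Z.to_nat (z + Z.of_nat N)).
  split. rewrite Z2Nat.id; lia. apply in_seq. lia.
Qed.

Fixpoint boxlist (d N : nat) : list (nat -> Z) :=
  match d with
  | O => zzero :: nil
  | S d' => flat_map (fun n => map (fun z => upd n d' z) (zrange N)) (boxlist d' N)
  end.

Lemma boxlist_spec d N n : bnd d N n -> exists n', In n' (boxlist d N) /\ zeq_d d n n'.
Proof.
  revert n; induction d; intros n H.
  - exists zzero. split. simpl; auto. intros j Hj; lia.
  - destruct (IHd n) as [n' [H1 H2]]. intros j Hj; apply H; lia.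
    exists (upd n' d (n d)). split.
    + simpl. apply in_flat_map. exists n'. split; auto. apply in_map_iff. exists (n d); split; auto.
      apply zrange_spec. apply H; lia.
    + intros j Hj. unfold upd. destruct (Nat.eqb_spec j d). subst; auto. apply H2. lia.
Qed.

Definition zofnat (b : nat) : Z := if Nat.even b then Z.of_nat (Nat.div2 b) else (- Z.of_nat (S (Nat.div2 b)))%Z.

Lemma zofnat_surj z : exists b, zofnat b = z.
Proof.
  destruct (Z_le_gt_dec 0 z).
  - exists (2 * Z.to_nat z)%nat. unfold zofnat. rewrite Nat.even_even, Nat.div2_double. lia.
  - exists (S (2 * (Z.to_nat (- z - 1))))%nat. unfold zofnat.
    rewrite Nat.even_succ, Nat.div2_succ_double.
    replace (Nat.odd (2 * Z.to_nat (- z - 1))) with false. lia.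
    symmetry. rewrite <- Nat.negb_even, Nat.even_even. auto.
Qed.

Fixpoint enum (d : nat) (p : nat) : nat -> Z :=
  match d with
  | O => zzero
  | S d' => upd (enum d' (fst (Cantor.of_nat p))) d' (zofnat (snd (Cantor.of_nat p)))
  end.

Lemma enum_surj d n : exists p, zeq_d d (enum d p) n.
Proof.
  revert n; induction d; intros n.
  - exists O. intros j Hj; lia.
  - destruct (IHd n) as [a Ha]. destruct (zofnat_surj (n d)) as [b Hb].
    exists (Cantor.to_nat (a, b)).
    change (enum (S d) (Cantor.to_nat (a, b))) with
      (upd (enum d (fst (Cantor.of_nat (Cantor.to_nat (a, b))))) d (zofnat (snd (Cantor.of_nat (Cantor.to_nat (a, b)))))).
    rewrite Cantor.cancel_of_to. simpl.
    intros j Hj. unfold upd. destruct (Nat.eqb_spec j d). subst; auto. apply Ha. lia.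
Qed.

Lemma zrange_bnd N z : In z (zrange N) -> (Z.abs z <= Z.of_nat N)%Z.
Proof. unfold zrange. intros H. apply in_map_iff in H. destruct H as [i [<- Hi]]. apply in_seq in Hi. lia. Qed.

Lemma boxlist_bnd d N n : In n (boxlist d N) -> bnd d N n.
Proof.
  revert n; induction d; intros n H.
  - intros j Hj; lia.
  - simpl in H. apply in_flat_map in H. destruct H as [n' [H1 H2]]. apply in_map_iff in H2.
    destruct H2 as [z [<- Hz]]. intros j Hj. unfold upd. destruct (Nat.eqb_spec j d).
    apply zrange_bnd; auto. apply IHd; auto. lia.
Qed.


Lemma zeq_refl d n : zeq_d d n n. Proof. intros j _; auto. Qed.
Lemma zeq_sym d n m : zeq_d d n m -> zeq_d d m n. Proof. intros H j Hj; rewrite H; auto. Qed.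
Lemma zeq_trans d n m p : zeq_d d n m -> zeq_d d m p -> zeq_d d n p.
Proof. intros H H' j Hj; rewrite H, H'; auto. Qed.

Lemma bnd_mono d a b n : bnd d a n -> (a <= b)%nat -> bnd d b n.
Proof. intros H Hab j Hj. specialize (H j Hj). lia. Qed.

Lemma bnd_add d a b n m : bnd d a n -> bnd d b m -> bnd d (a + b) (zadd n m).
Proof. intros H1 H2 j Hj. specialize (H1 j Hj). specialize (H2 j Hj). unfold zadd. lia. Qed.

Lemma bnd_opp d a n : bnd d a n -> bnd d a (zopp n).
Proof. intros H1 j Hj. specialize (H1 j Hj). unfold zopp. lia. Qed.

Lemma bnd_zero d a : bnd d a zzero.
Proof. intros j Hj. unfold zzero. lia. Qed.

Lemma tpt_back {k} d x (y z : torus k) w : z = tpt d x y w -> y = tpt d x z (zopp w).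
Proof.
  intros ->. rewrite tpt_tpt. rewrite (tpt_zeq d x y _ zzero). symmetry; apply tpt_zero.
  intros j Hj. unfold zadd, zopp, zzero. lia.
Qed.

Lemma tpt_cancel {k} d x (c : torus k) n m w : free d x ->
  tpt d x c m = tpt d x (tpt d x c n) w -> zeq_d d m (zadd n w).
Proof. intros Hf H. rewrite tpt_tpt in H. eapply tpt_inj; eauto. Qed.

Lemma gedge_form {k} d x M (A B : torus k -> Prop) y z :
  gedge d x M A B y z -> A y /\ B z /\ exists w, bnd d M w /\ z = tpt d x y w.
Proof.
  intros [Ha [Hb [v [[n [Hn ->]] ->]]]]. split; auto. split; auto. exists n. split; auto.
  symmetry; apply tpt_as_tadd.
Qed.

Lemma gedge_mk {k} d x M (A B : torus k -> Prop) y w :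
  A y -> B (tpt d x y w) -> bnd d M w -> gedge d x M A B y (tpt d x y w).
Proof.
  intros Ha Hb Hw. split; auto. split; auto. exists (tpt d x (tzero k) w).
  split. exists w; split; auto. apply tpt_as_tadd.
Qed.

Definition boxed {k} d x (c : torus k) (N : nat) (y : torus k) : Prop :=
  exists n, bnd d N n /\ y = tpt d x c n.

Definition Wit {k} d x M (A B : torus k -> Prop) (Mp : edgeset k) (c : torus k) (n0 m0 : nat -> Z)
  (N : nat) (f : edgeset k) : Prop :=
  matching d x M A B f /\ f (tpt d x c n0) (tpt d x c m0) /\
  (forall y z, boxed d x c N y -> Mp y z -> f y z) /\
  (forall y, boxed d x c N y -> A y -> exists z, f y z) /\
  (forall z, boxed d x c N z -> B z -> exists y, f y z).

Lemma transport {k} d x M (A B : torus k -> Prop) (Mp : edgeset k) c c' n0 m0 N f :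
  free d x -> bnd d M n0 -> bnd d M m0 ->
  (forall y z, Mp y z -> gedge d x M A B y z) ->
  (forall n, bnd d (N + M) n -> (A (tpt d x c n) <-> A (tpt d x c' n)) /\ (B (tpt d x c n) <-> B (tpt d x c' n))) ->
  (forall n w, bnd d N n -> bnd d M w ->
     (Mp (tpt d x c n) (tpt d x c (zadd n w)) <-> Mp (tpt d x c' n) (tpt d x c' (zadd n w)))) ->
  Wit d x M A B Mp c n0 m0 N f -> exists f', Wit d x M A B Mp c' n0 m0 N f'.
Proof.
  intros Hf Hn0 Hm0 HMp HAB HM [[Hfe [Hff Hfi]] [Hf0 [Hf1 [Hf2 Hf3]]]].
  exists (fun y' z' => exists n m, bnd d (N + M) n /\ bnd d (N + M) m /\ y' = tpt d x c' n /\
      z' = tpt d x c' m /\ f (tpt d x c n) (tpt d x c m)).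
  split; [split; [|split] | split; [|split; [|split]]].
  - intros y z [n [m [Hn [Hm [-> [-> Hnm]]]]]].
    destruct (gedge_form _ _ _ _ _ _ _ (Hfe _ _ Hnm)) as [Ha [Hb [w [Hw Hwe]]]].
    pose proof (tpt_cancel _ _ _ _ _ _ Hf Hwe) as Hz.
    rewrite (tpt_zeq d x c' m (zadd n w)) by auto. rewrite <- tpt_tpt.
    apply gedge_mk; auto. apply HAB; auto. rewrite tpt_tpt, <- (tpt_zeq d x c' m) by auto.
    apply (proj1 (proj2 (HAB m Hm))); auto.
  - intros y z1 z2 [n1 [m1 [Hn1 [Hm1 [-> [-> H1]]]]]] [n2 [m2 [Hn2 [Hm2 [E [-> H2]]]]]].
    apply tpt_inj in E; auto. rewrite (tpt_zeq d x c n1 n2) in H1 by auto.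
    pose proof (Hff _ _ _ H1 H2) as E2. apply tpt_inj in E2; auto. apply tpt_zeq; auto.
  - intros y1 y2 z [n1 [m1 [Hn1 [Hm1 [-> [-> H1]]]]]] [n2 [m2 [Hn2 [Hm2 [-> [E H2]]]]]].
    apply tpt_inj in E; auto. rewrite (tpt_zeq d x c m1 m2) in H1 by auto.
    pose proof (Hfi _ _ _ H1 H2) as E2. apply tpt_inj in E2; auto. apply tpt_zeq; auto.
  - exists n0, m0. repeat split; auto; eapply bnd_mono; eauto; lia.
  - intros y z [n [Hn ->]] Hyz.
    destruct (gedge_form _ _ _ _ _ _ _ (HMp _ _ Hyz)) as [Ha [Hb [w [Hw ->]]]].
    rewrite tpt_tpt in *. exists n, (zadd n w). repeat split; auto.
    eapply bnd_mono; eauto; lia. apply bnd_add; auto.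
    apply Hf1. exists n; auto. apply HM; auto.
  - intros y [n [Hn ->]] Ha. apply HAB in Ha; [|eapply bnd_mono; eauto; lia].
    destruct (Hf2 (tpt d x c n)) as [z Hz]; auto. exists n; auto.
    destruct (gedge_form _ _ _ _ _ _ _ (Hfe _ _ Hz)) as [_ [_ [w [Hw ->]]]].
    rewrite tpt_tpt in Hz. exists (tpt d x c' (zadd n w)), n, (zadd n w). repeat split; auto.
    eapply bnd_mono; eauto; lia. apply bnd_add; auto.
  - intros z [m [Hm ->]] Hb. apply HAB in Hb; [|eapply bnd_mono; eauto; lia].
    destruct (Hf3 (tpt d x c m)) as [y Hy]; auto. exists m; auto.
    destruct (gedge_form _ _ _ _ _ _ _ (Hfe _ _ Hy)) as [_ [_ [w [Hw Hwe]]]].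
    apply tpt_back in Hwe. rewrite tpt_tpt in Hwe. subst y.
    exists (tpt d x c' (zadd m (zopp w))), (zadd m (zopp w)), m. repeat split; auto.
    apply bnd_add; auto. apply bnd_opp; auto. eapply bnd_mono; eauto; lia.
Qed.


Lemma baire_shift {k} d x (S : torus k -> Prop) n :
  baire_meas S -> baire_meas (fun c => S (tpt d x c n)).
Proof.
  intros H. apply baire_ext with (fun c => S (tadd c (tpt d x (tzero k) n))).
  intros c. rewrite (tpt_as_tadd d x c n). tauto. apply baire_translate; auto.
Qed.

Lemma Q_baire {k} d x M (A B : torus k -> Prop) (Mp : edgeset k) n0 m0 N :
  free d x -> bnd d M n0 -> bnd d M m0 ->
  (forall y z, Mp y z -> gedge d x M A B y z) ->
  baire_meas A -> baire_meas B -> baire_matching d x M A Mp ->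
  baire_meas (fun c => exists f, Wit d x M A B Mp c n0 m0 N f).
Proof.
  intros Hf Hn0 Hm0 HMp HA HB HMm.
  apply (baire_dep (map (fun n c => A (tpt d x c n)) (boxlist d (N+M)) ++
     map (fun n c => B (tpt d x c n)) (boxlist d (N+M)) ++
     flat_map (fun n => map (fun w c => Mp (tpt d x c n) (tpt d x c (zadd n w))) (boxlist d M)) (boxlist d N))).
  - intros S HS. apply in_app_iff in HS. destruct HS as [HS|HS]; [|apply in_app_iff in HS; destruct HS as [HS|HS]].
    + apply in_map_iff in HS. destruct HS as [n [<- _]]. apply baire_shift; auto.
    + apply in_map_iff in HS. destruct HS as [n [<- _]]. apply baire_shift; auto.
    + apply in_flat_map in HS. destruct HS as [n [_ HS]]. apply in_map_iff in HS. destruct HS as [w [<- Hw]].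
      assert (Hwb : bnd d M w).
      { apply boxlist_bnd; auto. }
      apply baire_ext with (fun c => (fun y => A y /\ Mp y (tadd y (tpt d x (tzero k) w))) (tpt d x c n)).
      { intros c. simpl. rewrite <- (tpt_as_tadd d x (tpt d x c n) w), tpt_tpt. split; [tauto|].
        intros H. split; auto. apply (HMp _ _ H). }
      apply (baire_shift d x (fun y => A y /\ Mp y (tadd y (tpt d x (tzero k) w))) n). apply HMm. exists w. split; auto.
  - intros c c' Hcc' [f Hwf]. apply (transport d x M A B Mp c c' n0 m0 N f); auto.
    + intros n Hn. destruct (boxlist_spec _ _ _ Hn) as [n' [Hn' Hz]].
      rewrite !(tpt_zeq d x _ n n') by auto. split.
      * apply (Hcc' (fun c => A (tpt d x c n'))). apply in_app_iff; left. apply in_map_iff. exists n'; auto.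
      * apply (Hcc' (fun c => B (tpt d x c n'))). apply in_app_iff; right. apply in_app_iff; left.
        apply in_map_iff. exists n'; auto.
    + intros n w Hn Hw. destruct (boxlist_spec _ _ _ Hn) as [n' [Hn' Hz]].
      destruct (boxlist_spec _ _ _ Hw) as [w' [Hw' Hzw]].
      rewrite !(tpt_zeq d x _ n n') by auto.
      rewrite !(tpt_zeq d x _ (zadd n w) (zadd n' w')) by (intros j Hj; unfold zadd; rewrite Hz, Hzw; auto).
      apply (Hcc' (fun c => Mp (tpt d x c n') (tpt d x c (zadd n' w')))).
      apply in_app_iff; right. apply in_app_iff; right. apply in_flat_map. exists n'. split; auto.
      apply in_map_iff. exists w'; auto.
Qed.

Definition Crit {k} d x M (A B : torus k -> Prop) (Mp : edgeset k) n0 m0 (c : torus k) : Prop :=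
  forall N, exists f, Wit d x M A B Mp c n0 m0 N f.

Lemma Crit_baire {k} d x M (A B : torus k -> Prop) (Mp : edgeset k) n0 m0 :
  free d x -> bnd d M n0 -> bnd d M m0 ->
  (forall y z, Mp y z -> gedge d x M A B y z) ->
  baire_meas A -> baire_meas B -> baire_matching d x M A Mp ->
  baire_meas (Crit d x M A B Mp n0 m0).
Proof.
  intros. unfold Crit. apply (baire_countable_inter (fun N c => exists f, Wit d x M A B Mp c n0 m0 N f)).
  intros N. apply Q_baire; auto.
Qed.


Definition agree {k} (f : edgeset k) (y : torus k) (o : option (torus k)) : Prop :=
  match o with Some z => f y z | None => forall z, ~ f y z end.

Definition Good {k} d x M (A B : torus k -> Prop) Mp c n0 m0 (cs : list (option (torus k))) : Prop :=
  forall N, exists f, Wit d x M A B Mp c n0 m0 N f /\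
    forall p o, nth_error cs p = Some o -> agree f (tpt d x c (enum d p)) o.

Lemma Wit_mono {k} d x M (A B : torus k -> Prop) Mp c n0 m0 N N' f :
  (N <= N')%nat -> Wit d x M A B Mp c n0 m0 N' f -> Wit d x M A B Mp c n0 m0 N f.
Proof.
  intros HN [H1 [H2 [H3 [H4 H5]]]].
  assert (Hb : forall y, boxed d x c N y -> boxed d x c N' y).
  { intros y [n [Hn ->]]. exists n. split; auto. eapply bnd_mono; eauto. }
  split; [exact H1|]. split; [exact H2|]. split; [|split].
  intros; apply H3; auto. intros; apply H4; auto. intros; apply H5; auto.
Qed.

Lemma list_max_nat {T} (l : list T) (P : T -> nat -> Prop) :
  (forall t N N', P t N -> (N <= N')%nat -> P t N') ->
  (forall t, In t l -> exists N, P t N) -> exists N, forall t, In t l -> P t N.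
Proof.
  intros Hm. induction l as [|t l IH]; intros H.
  - exists O. intros t [].
  - destruct (H t (or_introl eq_refl)) as [N1 H1]. destruct IH as [N2 H2]. intros; apply H; simpl; auto.
    exists (max N1 N2). intros t' [<-|Ht']. apply Hm with N1; auto; lia. apply Hm with N2; auto; lia.
Qed.

Lemma nth_error_app_last {T} (cs : list T) o p o' :
  nth_error (cs ++ o :: nil) p = Some o' -> nth_error cs p = Some o' \/ (p = length cs /\ o' = o).
Proof.
  intros H. destruct (Nat.lt_ge_cases p (length cs)).
  - left. rewrite nth_error_app1 in H; auto.
  - right. rewrite nth_error_app2 in H; auto. destruct (p - length cs)%nat eqn:E.
    + simpl in H. inversion H. split; auto. lia.
    + simpl in H. destruct n; discriminate.
Qed.

Lemma Good_step {k} d x M (A B : torus k -> Prop) Mp c n0 m0 cs :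
  Good d x M A B Mp c n0 m0 cs -> exists o, Good d x M A B Mp c n0 m0 (cs ++ o :: nil).
Proof.
  intros HG. set (y := tpt d x c (enum d (length cs))).
  apply NNPP. intros Hn.
  assert (Hbad : forall o, exists N, forall f, Wit d x M A B Mp c n0 m0 N f ->
      ~ (forall p o', nth_error (cs ++ o :: nil) p = Some o' -> agree f (tpt d x c (enum d p)) o')).
  { intros o. apply NNPP. intros Ho. apply Hn. exists o. intros N. apply NNPP. intros HN.
    apply Ho. exists N. intros f Hf Ha. apply HN. exists f. auto. }
  destruct (list_max_nat (None :: map (fun w => Some (tpt d x y w)) (boxlist d M))
     (fun o N => forall f, Wit d x M A B Mp c n0 m0 N f ->
      ~ (forall p o', nth_error (cs ++ o :: nil) p = Some o' -> agree f (tpt d x c (enum d p)) o')))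
    as [N HN].
  { intros o N N' H HNN' f Hf. apply H. eapply Wit_mono; eauto. }
  { intros o _. apply Hbad. }
  destruct (HG N) as [f [Hf Hag]].
  destruct (classic (exists z, f y z)) as [[z Hz]|Hnz].
  - pose proof Hf as Hf'. destruct Hf' as [[Hfe _] _].
    destruct (gedge_form _ _ _ _ _ _ _ (Hfe _ _ Hz)) as [_ [_ [w [Hw ->]]]].
    destruct (boxlist_spec _ _ _ Hw) as [w' [Hw' Hzw]].
    apply (HN (Some (tpt d x y w'))) with f.
    + right. apply in_map_iff. exists w'; auto.
    + exact Hf.
    + intros p o' Hp. apply nth_error_app_last in Hp. destruct Hp as [Hp|[-> ->]]; auto.
      simpl. rewrite <- (tpt_zeq d x y w w'); auto.
  - apply (HN None) with f. left; auto. exact Hf.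
    intros p o' Hp. apply nth_error_app_last in Hp. destruct Hp as [Hp|[-> ->]]; auto.
    simpl. intros z Hz. apply Hnz; eauto.
Qed.

Fixpoint seqc {T} (g : list T -> T) (n : nat) : list T :=
  match n with O => nil | S n => seqc g n ++ g (seqc g n) :: nil end.

Lemma seqc_len {T} (g : list T -> T) n : length (seqc g n) = n.
Proof. induction n; simpl; auto. rewrite length_app, IHn. simpl. lia. Qed.

Lemma seqc_nth {T} (g : list T -> T) n p : (p < n)%nat -> nth_error (seqc g n) p = Some (g (seqc g p)).
Proof.
  induction n; intros H; [lia|]. simpl. destruct (Nat.lt_ge_cases p n).
  - rewrite nth_error_app1 by (rewrite seqc_len; auto). auto.
  - assert (p = n) by lia. subst. rewrite nth_error_app2 by (rewrite seqc_len; auto).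
    rewrite seqc_len, Nat.sub_diag. reflexivity.
Qed.

Lemma bnd_exists d n : exists N, bnd d N n.
Proof.
  induction d.
  - exists O. intros j Hj; lia.
  - destruct IHd as [N HN]. exists (max N (Z.to_nat (Z.abs (n d)))). intros j Hj.
    destruct (Nat.eq_dec j d). subst. lia. specialize (HN j ltac:(lia)). lia.
Qed.

Lemma list_idx {T} (l : list T) (Q : T -> nat -> Prop) :
  (forall t, In t l -> exists p, Q t p) -> exists K, forall t, In t l -> exists p, (p < K)%nat /\ Q t p.
Proof.
  intros H. apply (list_max_nat l (fun t K => exists p, (p < K)%nat /\ Q t p)).
  - intros t N N' [p [Hp Hq]] HN. exists p; split; auto; lia.
  - intros t Ht. destruct (H t Ht) as [p Hp]. exists (S p), p. auto.
Qed.

Lemma matching_sub {k} d x M (A B : torus k -> Prop) (P N : edgeset k) :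
  matching d x M A B P -> (forall a b, N a b -> P a b) -> matching d x M A B N.
Proof.
  intros [H1 [H2 H3]] H. split; [|split]; intros.
  apply H1; auto. eapply H2; eauto. eapply H3; eauto.
Qed.

Lemma ext_of_crit {k} d x M (A B : torus k -> Prop) (Mp : edgeset k) c n0 m0 :
  free d x -> bnd d M n0 -> bnd d M m0 -> extendable d x M A B Mp ->
  Crit d x M A B Mp n0 m0 c ->
  extendable d x M A B (fun a b => Mp a b \/ (a = tpt d x c n0 /\ b = tpt d x c m0)).
Proof.
  intros Hf Hn0 Hm0 [HMm [P0 [[HP0m [HP0A HP0B]] HP0]]] Hcrit.
  set (G := Good d x M A B Mp c n0 m0).
  assert (Hg : exists g : list (option (torus k)) -> option (torus k), forall cs, G cs -> G (cs ++ g cs :: nil)).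
  { apply (functional_choice (fun cs o => G cs -> G (cs ++ o :: nil))). intros cs.
    destruct (classic (G cs)) as [HG|HG].
    - destruct (Good_step _ _ _ _ _ _ _ _ _ _ HG) as [o Ho]. exists o; auto.
    - exists None. intros H; contradiction. }
  destruct Hg as [g Hg].
  assert (HGn : forall n, G (seqc g n)).
  { induction n; simpl; auto. intros N. destruct (Hcrit N) as [f Hfw]. exists f. split; auto.
    intros p o Hp. destruct p; discriminate. }
  set (yy := fun p => tpt d x c (enum d p)).
  set (ch := fun p => g (seqc g p)).
  assert (HK : forall K N, exists f, Wit d x M A B Mp c n0 m0 N f /\ forall p, (p < K)%nat -> agree f (yy p) (ch p)).
  { intros K N. destruct (HGn K N) as [f [Hw Ha]]. exists f. split; auto. intros p Hp.
    apply Ha. apply seqc_nth; auto. }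
  set (P := fun y z => exists p, y = yy p /\ ch p = Some z).
  set (Orb := fun y => exists n, y = tpt d x c n).
  assert (Hyy : forall n, exists p, yy p = tpt d x c n).
  { intros n. destruct (enum_surj d n) as [p Hp]. exists p. apply tpt_zeq; auto. }
  assert (Hloc : forall p, exists f, Wit d x M A B Mp c n0 m0 O%nat f /\ agree f (yy p) (ch p)).
  { intros p. destruct (HK (S p) O) as [f [Hw Ha]]. exists f; auto. }
  assert (HPedge : forall y z, P y z -> gedge d x M A B y z).
  { intros y z [p [-> Hp]]. destruct (Hloc p) as [f [[[Hfe _] _] Ha]]. unfold agree in Ha. rewrite Hp in Ha. auto. }
  assert (HPfun : forall y z1 z2, P y z1 -> P y z2 -> z1 = z2).
  { intros y z1 z2 [p1 [-> H1]] [p2 [E H2]].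
    destruct (HK (S (max p1 p2)) O) as [f [[[_ [Hff _]] _] Ha]].
    pose proof (Ha p1 ltac:(lia)) as A1. pose proof (Ha p2 ltac:(lia)) as A2.
    unfold agree in A1, A2. rewrite H1 in A1. rewrite H2 in A2. rewrite <- E in A2. eauto. }
  assert (HPinj : forall y1 y2 z, P y1 z -> P y2 z -> y1 = y2).
  { intros y1 y2 z [p1 [-> H1]] [p2 [-> H2]].
    destruct (HK (S (max p1 p2)) O) as [f [[[_ [_ Hfi]] _] Ha]].
    pose proof (Ha p1 ltac:(lia)) as A1. pose proof (Ha p2 ltac:(lia)) as A2.
    unfold agree in A1, A2. rewrite H1 in A1. rewrite H2 in A2. eauto. }
  assert (Hforce : forall y z, Orb y -> (forall N f, Wit d x M A B Mp c n0 m0 N f -> boxed d x c N y -> f y z) -> P y z).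
  { intros y z [n ->] H. destruct (Hyy n) as [p Hp]. destruct (bnd_exists d n) as [N HN].
    destruct (HK (S p) N) as [f [Hw Ha]]. specialize (Ha p ltac:(lia)).
    assert (Hfz : f (tpt d x c n) z). { apply H with N; auto. exists n; auto. }
    destruct Hw as [[_ [Hff _]] _].
    unfold agree in Ha. rewrite Hp in Ha. destruct (ch p) as [z'|] eqn:E.
    - exists p. split; auto. rewrite E. f_equal. eauto.
    - exfalso. eapply Ha; eauto. }
  assert (HPA : forall y, Orb y -> A y -> exists z, P y z).
  { intros y [n ->] Ha. destruct (Hyy n) as [p Hp]. destruct (bnd_exists d n) as [N HN].
    destruct (HK (S p) N) as [f [Hw Ha']]. specialize (Ha' p ltac:(lia)).
    destruct Hw as [_ [_ [_ [HA _]]]].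
    destruct (HA (tpt d x c n)) as [z Hz]; auto. exists n; auto.
    unfold agree in Ha'. rewrite Hp in Ha'. destruct (ch p) as [z'|] eqn:E.
    - exists z'. exists p. auto.
    - exfalso. eapply Ha'; eauto. }
  assert (HPB : forall z, Orb z -> B z -> exists y, P y z).
  { intros z [m ->] Hb.
    destruct (list_idx (boxlist d M) (fun w p => yy p = tpt d x (tpt d x c m) (zopp w))) as [K HKw].
    { intros w _. rewrite tpt_tpt. apply Hyy. }
    destruct (bnd_exists d m) as [N HN].
    destruct (HK K N) as [f [Hw Ha]].
    destruct Hw as [[Hfe [Hff Hfi]] [_ [_ [_ HB']]]].
    destruct (HB' (tpt d x c m)) as [y Hy]; auto. exists m; auto.
    destruct (gedge_form _ _ _ _ _ _ _ (Hfe _ _ Hy)) as [_ [_ [w [Hw Hwe]]]].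
    destruct (boxlist_spec _ _ _ Hw) as [w' [Hw' Hzw]].
    apply tpt_back in Hwe. rewrite (tpt_zeq d x _ (zopp w) (zopp w')) in Hwe
      by (intros j Hj; unfold zopp; rewrite Hzw; auto).
    destruct (HKw w' Hw') as [p [Hp Hyp]]. rewrite <- Hyp in Hwe. subst y.
    specialize (Ha p Hp). unfold agree in Ha. destruct (ch p) as [z'|] eqn:E.
    - exists (yy p), p. split; auto. rewrite E. f_equal. eauto.
    - exfalso. eapply Ha; eauto. }
  assert (Hclos : forall y z, gedge d x M A B y z -> (Orb y <-> Orb z)).
  { intros y z He. destruct (gedge_form _ _ _ _ _ _ _ He) as [_ [_ [w [_ ->]]]]. split.
    - intros [n ->]. exists (zadd n w). apply tpt_tpt.
    - intros [m Hm]. symmetry in Hm. apply tpt_back in Hm. rewrite tpt_tpt in Hm. exists (zadd m (zopp w)). auto. }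
  assert (HPO : forall y z, P y z -> Orb y).
  { intros y z [p [-> _]]. exists (enum d p). auto. }
  set (Ps := fun y z => (Orb y /\ P y z) \/ (~ Orb y /\ P0 y z)).
  assert (HPs : perfect_matching d x M A B Ps).
  { destruct HP0m as [H0e [H0f H0i]].
    split; [split; [|split]|split].
    - intros y z [[_ H]|[_ H]]; auto.
    - intros y z1 z2 [[H1 H2]|[H1 H2]] [[H3 H4]|[H3 H4]]; try contradiction; eauto.
    - intros y1 y2 z [[H1 H2]|[H1 H2]] [[H3 H4]|[H3 H4]]; eauto.
      + exfalso. apply H3. apply (Hclos _ _ (H0e _ _ H4)). apply (Hclos _ _ (HPedge _ _ H2)). auto.
      + exfalso. apply H1. apply (Hclos _ _ (H0e _ _ H2)). apply (Hclos _ _ (HPedge _ _ H4)). auto.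
    - intros y Ha. destruct (classic (Orb y)).
      + destruct (HPA y H Ha) as [z Hz]. exists z. left; auto.
      + destruct (HP0A y Ha) as [z Hz]. exists z. right; auto.
    - intros z Hb. destruct (classic (Orb z)).
      + destruct (HPB z H Hb) as [y Hy]. exists y. left; eauto.
      + destruct (HP0B z Hb) as [y Hy]. exists y. right. split; auto.
        intros Hy'. apply H. apply (Hclos _ _ (H0e _ _ Hy)). auto. }
  assert (Hsub : forall a b, (Mp a b \/ (a = tpt d x c n0 /\ b = tpt d x c m0)) -> Ps a b).
  { intros a b [Hab|[-> ->]].
    - destruct (classic (Orb a)).
      + left. split; auto. apply Hforce; auto. intros N f [_ [_ [H3 _]]] Hbx. auto.
      + right. split; auto.
    - left. split. exists n0; auto. apply Hforce. exists n0; auto.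
      intros N f [_ [H2 _]] _. auto. }
  split.
  - eapply matching_sub; [apply HPs | exact Hsub].
  - exists Ps. split; auto.
Qed.


Lemma least_index (Q : nat -> Prop) : (exists i, Q i) -> exists i, Q i /\ forall j, (j < i)%nat -> ~ Q j.
Proof.
  intros [i Hi].
  assert (H : forall n i, (i < n)%nat -> Q i -> exists i, Q i /\ forall j, (j < i)%nat -> ~ Q j).
  { induction n; intros i' Hi' Qi'; [lia|].
    destruct (classic (exists j, (j < n)%nat /\ Q j)) as [[j [Hj Qj]]|Hn].
    - apply (IHn j); auto.
    - exists i'. split; auto. intros j Hj Qj. apply Hn. exists j. split; auto. lia. }
  apply (H (S i) i); auto.
Qed.

Lemma baire_const_and {k} (P : Prop) (S : torus k -> Prop) : baire_meas S -> baire_meas (fun a => P /\ S a).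
Proof.
  intros H. destruct (classic P).
  - apply baire_ext with S; auto. intros; tauto.
  - apply baire_ext with (fun _ => False). intros; tauto. apply baire_false.
Qed.

Lemma baire_const_imp {k} (P : Prop) (S : torus k -> Prop) : baire_meas S -> baire_meas (fun a => P -> S a).
Proof.
  intros H. destruct (classic P).
  - apply baire_ext with S; auto. intros; tauto.
  - apply baire_ext with (fun _ => True). intros; tauto. apply baire_true.
Qed.

Lemma crit_of_perfect {k} d x M (A B : torus k -> Prop) (Mp P : edgeset k) c n0 m0 :
  perfect_matching d x M A B P -> (forall a b, Mp a b -> P a b) -> P (tpt d x c n0) (tpt d x c m0) ->
  Crit d x M A B Mp n0 m0 c.
Proof.
  intros [Hm [HA HB]] Hs H0 N. exists P. split; [exact Hm|]. split; [exact H0|]. split; [intros; auto|]. split; intros; auto.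
Qed.

Lemma case1 {k} d x M (A B Ai : torus k -> Prop) (ri : nat) (Mprev : edgeset k) :
  free d x -> baire_meas A -> baire_meas B -> baire_meas Ai -> (forall a, Ai a -> A a) ->
  sparse d x (Z.of_nat ri + 4 * Z.of_nat M)%Z Ai ->
  baire_matching d x M A Mprev -> extendable d x M A B Mprev ->
  exists Mi : edgeset k,
    matching d x M A B Mi /\
    baire_matching d x M A Mi /\
    (forall a b, Mprev a b -> Mi a b) /\
    (forall a, Ai a -> exists b, B b /\ Mi a b) /\
    (forall (u : torus k) (n m n' m' : nat -> Z),
        Mi (tpt d x u n) (tpt d x u m) -> ~ Mprev (tpt d x u n) (tpt d x u m) ->
        Mi (tpt d x u n') (tpt d x u m') -> ~ Mprev (tpt d x u n') (tpt d x u m') ->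
        ~ (zeq_d d n n' /\ zeq_d d m m') ->
        let R := (Z.of_nat ri + 2 * Z.of_nat M)%Z in
        zfar d R n n' /\ zfar d R n m' /\ zfar d R m n' /\ zfar d R m m') /\
    (forall a b, Mi a b -> ~ Mprev a b ->
        extendable d x M A B (fun a' b' => Mprev a' b' \/ (a' = a /\ b' = b))).
Proof.
  intros Hf HA HB HAi HAiA Hsp HMm Hext.
  pose proof Hext as [HMpm [P0 [HP0 HP0s]]].
  assert (HMe : forall a b, Mprev a b -> gedge d x M A B a b) by apply HMpm.
  set (Wl := boxlist d M).
  set (wi := fun i => nth i Wl zzero).
  assert (Hwi : forall i, (i < length Wl)%nat -> bnd d M (wi i)).
  { intros i Hi. apply boxlist_bnd. apply nth_In; auto. }
  assert (Hwi' : forall i, bnd d M (wi i)).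
  { intros i. destruct (Nat.lt_ge_cases i (length Wl)) as [Hi|Hi]. auto.
    unfold wi. rewrite nth_overflow; auto. apply bnd_zero. }
  assert (Hwl : forall w, bnd d M w -> exists i, (i < length Wl)%nat /\ zeq_d d w (wi i)).
  { intros w Hw. destruct (boxlist_spec _ _ _ Hw) as [w' [Hw' Hz]].
    destruct (In_nth _ _ zzero Hw') as [i [Hi Hie]]. exists i. split; auto. unfold wi, Wl. rewrite Hie; auto. }
  set (Cr := fun i a => Crit d x M A B Mprev zzero (wi i) a).
  set (First := fun a i => (i < length Wl)%nat /\ Cr i a /\ forall j, (j < i)%nat -> ~ Cr j a).
  set (UA := fun a => Ai a /\ forall b, ~ Mprev a b).
  set (New := fun a b => UA a /\ exists i, First a i /\ b = tpt d x a (wi i)).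
  assert (First_uniq : forall a i i', First a i -> First a i' -> i = i').
  { intros a i i' [_ [H1 H2]] [_ [H1' H2']].
    destruct (Nat.lt_total i i') as [H|[H|H]]; [exfalso; eapply H2'; eauto | auto | exfalso; eapply H2; eauto]. }
  assert (Hnew_ext : forall a i, First a i ->
     extendable d x M A B (fun a' b' => Mprev a' b' \/ (a' = a /\ b' = tpt d x a (wi i)))).
  { intros a i [Hi [Hc _]]. pose proof (ext_of_crit d x M A B Mprev a zzero (wi i) Hf (bnd_zero _ _) (Hwi i Hi) Hext Hc) as H.
    rewrite tpt_zero in H. exact H. }
  assert (Hnew_edge : forall a b, New a b -> gedge d x M A B a b).
  { intros a b [_ [i [Hfi ->]]]. destruct (Hnew_ext a i Hfi) as [[He _] _]. apply He. right; auto. }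
  assert (HUA_ex : forall a, UA a -> exists i, First a i).
  { intros a [Ha _]. pose proof HP0 as [HP0m [HP0A _]]. destruct (HP0A a (HAiA a Ha)) as [b Hb].
    destruct (gedge_form _ _ _ _ _ _ _ (proj1 HP0m _ _ Hb)) as [_ [_ [w [Hw ->]]]].
    destruct (Hwl w Hw) as [i [Hi Hz]].
    destruct (least_index (fun i => (i < length Wl)%nat /\ Cr i a)) as [i0 [[Hi0 Hc0] Hl]].
    { exists i. split; auto. apply (crit_of_perfect d x M A B Mprev P0); auto.
      rewrite tpt_zero. rewrite <- (tpt_zeq d x a w); auto. }
    exists i0. split; auto. split; auto. intros j Hj Hcj. apply (Hl j Hj). split; auto. lia. }
  exists (fun a b => Mprev a b \/ New a b).
  split; [|split; [|split; [|split; [|split]]]].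
  -
    split; [|split].
    + intros a b [H|H]; auto.
    + intros a b b' [H|H] [H'|H'].
      * eapply (proj1 (proj2 HMpm)); eauto.
      * exfalso. destruct H' as [[_ Hn] _]. eapply Hn; eauto.
      * exfalso. destruct H as [[_ Hn] _]. eapply Hn; eauto.
      * destruct H as [_ [i [Hi ->]]]. destruct H' as [_ [i' [Hi' ->]]].
        rewrite (First_uniq a i i'); auto.
    + intros a a' b [H|H] [H'|H'].
      * eapply (proj2 (proj2 HMpm)); eauto.
      * destruct H' as [[_ Hn] [i [Hi Hb]]]. destruct (Hnew_ext a' i Hi) as [[_ [_ Hinj]] _].
        assert (a = a'). { apply (Hinj a a' b). left; auto. right; auto. }
        subst. exfalso; eapply Hn; eauto.
      * destruct H as [[_ Hn] [i [Hi Hb]]]. destruct (Hnew_ext a i Hi) as [[_ [_ Hinj]] _].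
        assert (a = a'). { apply (Hinj a a' b). right; auto. left; auto. }
        subst. exfalso; eapply Hn; eauto.
      * destruct H as [[Ha _] [i [Hi ->]]]. destruct H' as [[Ha' _] [i' [Hi' Hb]]].
        assert (Hwb := Hwi i (proj1 Hi)). assert (Hwb' := Hwi i' (proj1 Hi')).
        apply tpt_back in Hb. rewrite tpt_tpt in Hb.
        rewrite <- (tpt_zero d x a) in Ha.
        rewrite Hb in Ha'. rewrite Hb.
        destruct (classic (zeq_d d zzero (zadd (wi i) (zopp (wi i'))))) as [Hz|Hz].
        -- rewrite <- (tpt_zeq d x a _ _ Hz). symmetry; apply tpt_zero.
        -- destruct (Hsp a _ _ Ha Ha' Hz) as [j [Hj Hfar]].
           specialize (Hwb j Hj). specialize (Hwb' j Hj). unfold zzero, zadd, zopp in Hfar. lia.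
  -
    intros v [nv [Hnv ->]].
    assert (HUAb : baire_meas UA).
    { apply baire_inter2; auto.
      apply baire_ext with (fun a => ~ exists i, (i < length Wl)%nat /\ Mprev a (tpt d x a (wi i))).
      { intros a. split.
        - intros Hn b Hb. apply Hn. destruct (gedge_form _ _ _ _ _ _ _ (HMe _ _ Hb)) as [_ [_ [w [Hw ->]]]].
          destruct (Hwl w Hw) as [i [Hi Hz]]. exists i. split; auto. rewrite <- (tpt_zeq d x a w); auto.
        - intros Hn [i [_ Hi]]. eapply Hn; eauto. }
      apply baire_compl. apply (baire_countable_union (fun i a => (i < length Wl)%nat /\ Mprev a (tpt d x a (wi i)))).
      intros i. apply baire_const_and.
      apply baire_ext with (fun a => A a /\ Mprev a (tadd a (tpt d x (tzero k) (wi i)))).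
      { intros a. rewrite <- tpt_as_tadd. split; [tauto|]. intros H; split; auto. apply (HMe _ _ H). }
      apply HMm. destruct (Nat.lt_ge_cases i (length Wl)) as [Hi|Hi].
      + exists (wi i). split; [apply Hwi; auto | reflexivity].
      + exists zzero. split. apply bnd_zero. unfold wi. rewrite nth_overflow; auto. }
    assert (HFb : forall i, baire_meas (fun a => First a i)).
    { intros i. apply baire_const_and. apply baire_inter2.
      - apply Crit_baire; auto. apply bnd_zero.
      - apply (baire_countable_inter (fun j a => (j < i)%nat -> ~ Cr j a)). intros j.
        apply baire_const_imp. apply baire_compl. apply Crit_baire; auto. apply bnd_zero. }
    apply baire_ext with (fun a => (A a /\ Mprev a (tadd a (tpt d x (tzero k) nv))) \/
        (A a /\ UA a /\ exists i, zeq_d d nv (wi i) /\ First a i)).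
    { intros a. rewrite <- tpt_as_tadd. split.
      - intros [[Ha H]|[Ha [Hu [i [Hz Hi]]]]]. split; auto. split; auto. right. split; auto.
        exists i. split; auto. apply tpt_zeq; auto.
      - intros [Ha [H|[Hu [i [Hi He]]]]]. left; auto. right. split; auto. split; auto.
        exists i. split; auto. eapply tpt_inj; eauto. }
    apply baire_union2. apply HMm. exists nv; auto.
    apply baire_inter2; auto. apply baire_inter2; auto.
    apply (baire_countable_union (fun i a => zeq_d d nv (wi i) /\ First a i)). intros i.
    apply baire_const_and; auto.
  - intros a b H; left; auto.
  - intros a Ha. destruct (classic (exists b, Mprev a b)) as [[b Hb]|Hn].
    + exists b. split. apply (HMe _ _ Hb). left; auto.
    + assert (Hu : UA a). { split; auto. intros b Hb; apply Hn; eauto. }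
      destruct (HUA_ex a Hu) as [i Hi]. exists (tpt d x a (wi i)). split.
      * destruct (Hnew_ext a i Hi) as [[He _] _]. apply (He a). right; auto.
      * right. split; auto. exists i; auto.
  - intros u n m n' m' [H1|H1] H2 [H3|H3] H4 Hnz; try contradiction.
    destruct H1 as [[Ha _] [i [Hi Hm]]]. destruct H3 as [[Ha' _] [i' [Hi' Hm']]].
    assert (Hwb := Hwi i (proj1 Hi)). assert (Hwb' := Hwi i' (proj1 Hi')).
    apply tpt_cancel in Hm; auto. apply tpt_cancel in Hm'; auto.
    assert (Hnn : ~ zeq_d d n n').
    { intros Hz. apply Hnz. split; auto. rewrite (tpt_zeq d x u n n') in Hi by auto.
      pose proof (First_uniq _ _ _ Hi Hi'). subst i'.
      intros j Hj. rewrite Hm, Hm' by auto. unfold zadd. rewrite Hz; auto. }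
    destruct (Hsp u n n' Ha Ha' Hnn) as [j [Hj Hfar]].
    specialize (Hwb j Hj). specialize (Hwb' j Hj). specialize (Hm j Hj). specialize (Hm' j Hj).
    unfold zadd in Hm, Hm'.
    cbv zeta. unfold zfar. split; [|split; [|split]]; exists j; (split; [exact Hj | lia]).
  - intros a b [H|H] Hn; [contradiction|].
    destruct H as [_ [i [Hi ->]]]. apply Hnew_ext; auto.
Qed.


Lemma gedge_T {k} d x M (A B : torus k -> Prop) y z :
  gedge d x M A B y z -> gedge d x M B A z y.
Proof.
  intros H. destruct (gedge_form _ _ _ _ _ _ _ H) as [Ha [Hb [w [Hw Hz]]]].
  apply tpt_back in Hz. rewrite Hz. apply gedge_mk; auto. rewrite <- Hz; auto. apply bnd_opp; auto.
Qed.

Lemma matching_T {k} d x M (A B : torus k -> Prop) (N : edgeset k) :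
  matching d x M A B N -> matching d x M B A (fun b a => N a b).
Proof.
  intros [H1 [H2 H3]]. split; [|split]; intros.
  apply gedge_T; auto. eapply H3; eauto. eapply H2; eauto.
Qed.

Lemma extendable_T {k} d x M (A B : torus k -> Prop) (N : edgeset k) :
  extendable d x M A B N -> extendable d x M B A (fun b a => N a b).
Proof.
  intros [Hm [P [[HPm [HPA HPB]] HPs]]]. split. apply matching_T; auto.
  exists (fun b a => P a b). split; auto. split; auto. apply matching_T; auto.
Qed.

Lemma extendable_ext {k} d x M (A B : torus k -> Prop) (N N' : edgeset k) :
  (forall a b, N a b <-> N' a b) -> extendable d x M A B N -> extendable d x M A B N'.
Proof.
  intros H [Hm [P [HP HPs]]]. split.
  - apply matching_sub with N; auto. intros a b Hab; apply H; auto.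
  - exists P. split; auto. intros a b Hab; apply HPs, H; auto.
Qed.

Lemma baire_matching_T {k} d x M (A B : torus k -> Prop) (N : edgeset k) :
  matching d x M A B N -> baire_matching d x M A N -> baire_matching d x M B (fun b a => N a b).
Proof.
  intros [He _] HN v [nv [Hnv ->]].
  apply baire_ext with (fun b => (fun a => A a /\ N a (tadd a (tpt d x (tzero k) (zopp nv)))) (tpt d x b nv)).
  - intros b. rewrite <- (tpt_as_tadd d x b nv). rewrite <- (tpt_as_tadd d x (tpt d x b nv) (zopp nv)).
    rewrite tpt_tpt. rewrite (tpt_zeq d x b (zadd nv (zopp nv)) zzero), tpt_zero.
    2: { intros j Hj. unfold zadd, zopp, zzero. lia. }
    split.
    + intros [Ha Hn]. split; auto. apply (He _ _ Hn).
    + intros [Hb Hn]. split; auto. apply (He _ _ Hn).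
  - apply (baire_shift d x (fun a => A a /\ N a (tadd a (tpt d x (tzero k) (zopp nv))))).
    apply HN. exists (zopp nv). split; auto. apply bnd_opp; auto.
Qed.


Theorem lemma5p1 (k d : nat) (hk : (1 <= k)%nat) (hd : (1 <= d)%nat)
  (x : nat -> torus k) (hfree : free d x)
  (M : nat) (hM : (1 <= M)%nat)
  (A B : torus k -> Prop) (hA : baire_meas A) (hB : baire_meas B)
  (i : nat) (hi : (1 <= i)%nat) (ri : nat)
  (Ai Bi : torus k -> Prop)
  (hAiA : forall a, Ai a -> A a) (hBiB : forall b, Bi b -> B b)
  (hAi : baire_meas Ai) (hBi : baire_meas Bi)
  (hempty : (forall a, ~ Ai a) \/ (forall b, ~ Bi b))
  (hsparse : sparse d x (Z.of_nat ri + 4 * Z.of_nat M)%Z (fun y => Ai y \/ Bi y))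
  (Mprev : edgeset k)
  (hMprev_meas : baire_matching d x M A Mprev)
  (hMprev_ext : extendable d x M A B Mprev) :
  exists Mi : edgeset k,
    matching d x M A B Mi /\
    baire_matching d x M A Mi /\
    (forall a b, Mprev a b -> Mi a b) /\
    (forall a, Ai a -> exists b, B b /\ Mi a b) /\
    (forall b, Bi b -> exists a, A a /\ Mi a b) /\
    (forall (u : torus k) (n m n' m' : nat -> Z),
        Mi (tpt d x u n) (tpt d x u m) -> ~ Mprev (tpt d x u n) (tpt d x u m) ->
        Mi (tpt d x u n') (tpt d x u m') -> ~ Mprev (tpt d x u n') (tpt d x u m') ->
        ~ (zeq_d d n n' /\ zeq_d d m m') ->
        let R := (Z.of_nat ri + 2 * Z.of_nat M)%Z in
        zfar d R n n' /\ zfar d R n m' /\ zfar d R m n' /\ zfar d R m m') /\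
    (forall a b, Mi a b -> ~ Mprev a b ->
        extendable d x M A B (fun a' b' => Mprev a' b' \/ (a' = a /\ b' = b))).
Proof.
  destruct hempty as [HAe|HBe].
  - assert (Hsp : sparse d x (Z.of_nat ri + 4 * Z.of_nat M)%Z Bi).
    { intros u n m H1 H2 H3. apply (hsparse u n m); [right|right|]; auto. }
    destruct (case1 d x M B A Bi ri (fun b a => Mprev a b) hfree hB hA hBi hBiB Hsp
      (baire_matching_T _ _ _ _ _ _ (proj1 hMprev_ext) hMprev_meas) (extendable_T _ _ _ _ _ _ hMprev_ext))
      as [Mi [H1 [H2 [H3 [H4 [H5 H6]]]]]].
    exists (fun a b => Mi b a).
    split; [|split; [|split; [|split; [|split; [|split]]]]].
    + apply (matching_T _ _ _ _ _ _ H1).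
    + apply (baire_matching_T _ _ _ _ _ _ H1 H2).
    + intros a b H; apply H3; auto.
    + intros a Ha; exfalso; eapply HAe; eauto.
    + intros b Hb. destruct (H4 b Hb) as [a [Ha Hab]]. exists a; auto.
    + intros u n m n' m' G1 G2 G3 G4 G5.
      assert (G5' : ~ (zeq_d d m m' /\ zeq_d d n n')) by tauto.
      destruct (H5 u m n m' n' G1 G2 G3 G4 G5') as [Z1 [Z2 [Z3 Z4]]].
      assert (Zs : forall r a b, zfar d r a b -> zfar d r b a).
      { intros r a b [j [Hj Hf]]. exists j. split; auto. lia. }
      cbv zeta in *. repeat split; auto.
    + intros a b Hab Hn. pose proof (H6 b a Hab Hn) as HE.
      apply extendable_T in HE. eapply extendable_ext; [|exact HE].
      intros a' b'. simpl. tauto.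
  - assert (Hsp : sparse d x (Z.of_nat ri + 4 * Z.of_nat M)%Z Ai).
    { intros u n m H1 H2 H3. apply (hsparse u n m); [left|left|]; auto. }
    destruct (case1 d x M A B Ai ri Mprev hfree hA hB hAi hAiA Hsp hMprev_meas hMprev_ext)
      as [Mi [H1 [H2 [H3 [H4 [H5 H6]]]]]].
    exists Mi. repeat (split; [assumption|]). split.
    + intros b Hb; exfalso; eapply HBe; eauto.
    + split; auto.
Qed.
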